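(* Let $p,q$ be positive integers and $\hat e\ge 2$ an integer. The length of every cycle of the Cat map over $\mathbb{Z}_{2^{\hat e}}$ belongs to the set $\{1\}\cup\{2^k\cdot T_1: k=0,1,\dots,\hat e-1\}$, where $T_1=3$ if $p$ and $q$ are both odd, $T_1=2$ if exactly one of $p,q$ is odd, and $T_1=1$ if $p$ and $q$ are both even.
   Context: $\mathbf{C}=\begin{bmatrix}1 & p\\ q & 1+pq\end{bmatrix}$; the Cat map over $\mathbb{Z}_{2^{\hat e}}$ is the bijection $v\mapsto\mathbf{C}v\bmod 2^{\hat e}$ of $\mathbb{Z}_{2^{\hat e}}^2$; a cycle of length $n$ is the orbit of a point $v$ for which $n$ is the least positive integer with $\mathbf{C}^nv\equiv v\pmod{2^{\hat e}}$. *)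

(* Defs.v *)
From mathcomp Require Import all_boot.
Set Implicit Arguments. Unset Strict Implicit. Unset Printing Implicit Defensive.

(* Points of Z_{2^e}^2 are pairs (x, y) of naturals with x, y < 2^e.
   The Cat matrix C = [[1, p], [q, 1 + p q]] acts by v |-> C v mod 2^e. *)
Definition cat_map (e p q : nat) (v : nat * nat) : nat * nat :=
  ((1 * v.1 + p * v.2) %% 2 ^ e, (q * v.1 + (1 + p * q) * v.2) %% 2 ^ e).

Definition in_Z2e (e : nat) (v : nat * nat) : Prop := v.1 < 2 ^ e /\ v.2 < 2 ^ e.

Definition cycle_length (e p q : nat) (v : nat * nat) (n : nat) : Prop :=
  0 < n /\ iter n (cat_map e p q) v = v /\
  (forall m, 0 < m -> m < n -> iter m (cat_map e p q) v <> v).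

Definition T1 (p q : nat) : nat :=
  if odd p && odd q then 3 else if odd p || odd q then 2 else 1.

(* Main.v *)
Require Import Defs.
From mathcomp Require Import all_boot.
From mathcomp Require Import zify ring.

Definition mat := (nat * nat * nat * nat)%type.
Definition mmul (M N : mat) : mat :=
  let: (a, b, c, d) := M in let: (a', b', c', d') := N in
  (a * a' + b * c', a * b' + b * d', c * a' + d * c', c * b' + d * d').
Definition Cm (p q : nat) : mat := (1, p, q, 1 + p * q).
Definition Im : mat := (1, 0, 0, 1).
Definition mpow p q n := iter n (mmul (Cm p q)) Im.
Definition app (M : mat) (v : nat * nat) : nat * nat :=
  let: (a, b, c, d) := M in (a * v.1 + b * v.2, c * v.1 + d * v.2).
Definition modp m (v : nat * nat) := (v.1 %% m, v.2 %% m).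

Lemma mmulA A B C : mmul A (mmul B C) = mmul (mmul A B) C.
Proof.
case: A => [[[a b] c] d]; case: B => [[[a1 b1] c1] d1]; case: C => [[[a2 b2] c2] d2].
rewrite /mmul; congr (_,_,_,_); ring.
Qed.

Lemma mmul1 A : mmul Im A = A.
Proof. case: A => [[[a b] c] d]; rewrite /mmul /Im; congr (_,_,_,_); ring. Qed.

Lemma mpow_add p q m n : mpow p q (m + n) = mmul (mpow p q m) (mpow p q n).
Proof.
elim: m => [|m IH]; first by rewrite add0n; exact: (esym (mmul1 _)).
by rewrite addSn /mpow !iterS -/(mpow p q (m + n)) -/(mpow p q m) IH mmulA.
Qed.

Lemma app_mul A B v : app (mmul A B) v = app A (app B v).
Proof.
case: A => [[[a b] c] d]; case: B => [[[a1 b1] c1] d1]; case: v => x y.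
rewrite /mmul /app /=; congr (_,_); ring.
Qed.

Lemma modp_app m A v : modp m (app A (modp m v)) = modp m (app A v).
Proof.
case: A => [[[a b] c] d]; case: v => x y; rewrite /modp /app /=.
congr (_,_).
  by rewrite -modnDm -(modnMm a) -(modnMm b) !modn_mod modnMm modnMm modnDm.
by rewrite -modnDm -(modnMm c) -(modnMm d) !modn_mod modnMm modnMm modnDm.
Qed.

Lemma iter_mpow e p q v n : in_Z2e e v ->
  iter n (cat_map e p q) v = modp (2 ^ e) (app (mpow p q n) v).
Proof.
case: v => x y [/= Hx Hy].
elim: n => [|n IH].
  rewrite /= /modp /= !mul1n !mul0n addn0 add0n.
  by rewrite (modn_small Hx) (modn_small Hy).
rewrite iterS IH /mpow iterS -/(mpow p q n).
rewrite app_mul -(modp_app _ (Cm p q)).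
by case: (app (mpow p q n) (x, y)) => s t; rewrite /cat_map /modp /app /Cm /=.
Qed.

Definition congI j (M : mat) := exists al be ga de,
  M = (1 + 2 ^ j * al, 2 ^ j * be, 2 ^ j * ga, 1 + 2 ^ j * de).

Lemma congI_sq j M : 0 < j -> congI j M -> congI j.+1 (mmul M M).
Proof.
case: j => [//|j] _ [al [be [ga [de ->]]]].
exists (al + 2^j * (al*al + be*ga)), (be + 2^j*be*(al+de)),
       (ga + 2^j*ga*(al+de)), (de + 2^j*(be*ga + de*de)).
rewrite /mmul !expnS; congr (_,_,_,_); ring.
Qed.

Lemma odd_half n : odd n -> n = 1 + 2 * n./2.
Proof. move=> H; have := odd_double_half n; rewrite H; lia. Qed.
Lemma even_half n : ~~ odd n -> n = 2 * n./2.
Proof. move=> H; have := odd_double_half n; rewrite (negbTE H); lia. Qed.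

Lemma congI1 (a b c d : nat) : odd a -> ~~ odd b -> ~~ odd c -> odd d ->
  congI 1 (a, b, c, d).
Proof.
move=> Ha Hb Hc Hd; exists a./2, b./2, c./2, d./2; rewrite expn1.
by rewrite -odd_half // -even_half // -even_half // -odd_half.
Qed.

Lemma base p q : congI 1 (mpow p q (T1 p q)).
Proof.
rewrite /T1; case Hp: (odd p); case Hq: (odd q) => /=;
  apply: congI1; rewrite /=; do 10 (rewrite ?oddD ?oddM ?Hp ?Hq /=); by [].
Qed.

Lemma pow_cong p q k : congI k.+1 (mpow p q (T1 p q * 2 ^ k)).
Proof.
elim: k => [|k IH]; first by rewrite muln1; apply: base.
rewrite expnS mulnCA mul2n -addnn mpow_add.
by apply: congI_sq.
Qed.

Lemma congI_app e M v : in_Z2e e v -> congI e M -> modp (2 ^ e) (app M v) = v.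
Proof.
case: v => x y [/= Hx Hy] [al [be [ga [de ->]]]]; rewrite /modp /app /=.
congr (_,_).
  have -> : (1 + 2 ^ e * al) * x + 2 ^ e * be * y = (al * x + be * y) * 2 ^ e + x by ring.
  by rewrite modnMDl modn_small.
have -> : 2 ^ e * ga * x + (1 + 2 ^ e * de) * y = (ga * x + de * y) * 2 ^ e + y by ring.
by rewrite modnMDl modn_small.
Qed.

Definition par (M : mat) := let: (a, b, c, d) := M in (odd a, odd b, odd c, odd d).
Definition tab r := if r == 0 then (true, false, false, true)
  else if r == 1 then (true, true, true, false) else (false, true, true, true).

Lemma par_pow p q n : odd p -> odd q -> par (mpow p q n) = tab (n %% 3).
Proof.
move=> Hp Hq; elim: n => [|n IH] //.
rewrite /mpow iterS -/(mpow p q n).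
have Hr : n %% 3 < 3 by rewrite ltn_mod.
have Hs : n.+1 %% 3 = (n %% 3).+1 %% 3 by rewrite -addn1 -modnDml addn1.
move: IH; case: (mpow p q n) => [[[a b] c] d] /=.
rewrite Hs /tab; do 3 rewrite ?oddD ?oddM; rewrite Hp Hq /=.
by case E: (n %% 3) Hr => [|[|[|r]]] // _ [-> -> -> ->].
Qed.

Lemma zero_fix e p q n v : odd p -> odd q -> in_Z2e e v -> n %% 3 != 0 ->
  modp (2 ^ e) (app (mpow p q n) v) = v -> v = (0, 0).
Proof.
move=> Hp Hq Hv Hn.
have := @par_pow p q n Hp Hq.
case: (mpow p q n) => [[[a b] c] d] Hpar.
case: v Hv => x y [/= Hx Hy]; rewrite /modp /app /= => [[E1 E2]].
suff H : forall j, j <= e -> (2 ^ j %| x) && (2 ^ j %| y).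
  have /andP[/dvdnP[k1 Hk1] /dvdnP[k2 Hk2]] := H e (leqnn e).
  have Hpos : 0 < 2 ^ e by rewrite expn_gt0.
  case: k1 Hk1 => [|k1] Hk1; last by move: Hx; rewrite Hk1; nia.
  case: k2 Hk2 => [|k2] Hk2; last by move: Hy; rewrite Hk2; nia.
  by rewrite Hk1 Hk2.
elim=> [|j IH] Hj; first by rewrite !dvd1n.
have /andP[/dvdnP[w1 Hw1] /dvdnP[w2 Hw2]] := IH (ltnW Hj).
have Hej : 2 ^ e = 2 ^ j * 2 ^ (e - j) by rewrite -expnD subnKC // ltnW.
have Hpj : 0 < 2 ^ j by rewrite expn_gt0.
have H2 : 2 %| 2 ^ (e - j).
  have : 0 < e - j by rewrite subn_gt0.
  by case: (e - j) => [|k] // _; rewrite expnS dvdn_mulr.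
have M1 : odd (a * w1 + b * w2) = odd w1.
  have : 2 ^ j * ((a * w1 + b * w2) %% 2 ^ (e - j)) = 2 ^ j * (w1 %% 2 ^ (e - j)).
    rewrite !muln_modr // -Hej.
    have -> : 2 ^ j * (a * w1 + b * w2) = a * x + b * y by rewrite Hw1 Hw2; ring.
    by rewrite E1 [2 ^ j * w1]mulnC -Hw1 modn_small.
  move/eqP; rewrite eqn_pmul2l // => /eqP /(congr1 (modn^~ 2)).
  by rewrite !modn_dvdm // !modn2; case: odd; case: odd.
have M2 : odd (c * w1 + d * w2) = odd w2.
  have : 2 ^ j * ((c * w1 + d * w2) %% 2 ^ (e - j)) = 2 ^ j * (w2 %% 2 ^ (e - j)).
    rewrite !muln_modr // -Hej.
    have -> : 2 ^ j * (c * w1 + d * w2) = c * x + d * y by rewrite Hw1 Hw2; ring.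
    by rewrite E2 [2 ^ j * w2]mulnC -Hw2 modn_small.
  move/eqP; rewrite eqn_pmul2l // => /eqP /(congr1 (modn^~ 2)).
  by rewrite !modn_dvdm // !modn2; case: odd; case: odd.
have [O1 O2] : ~~ odd w1 /\ ~~ odd w2.
  move: Hn Hpar M1 M2; rewrite !oddD !oddM /tab.
  case: (n %% 3) => [|[|r]] //= _ [-> -> -> ->];
    case: (odd w1); case: (odd w2) => //=.
rewrite Hw1 Hw2 (even_half _ O1) (even_half _ O2) expnSr.
by apply/andP; split; apply/dvdnP; [exists w1./2 | exists w2./2]; ring.
Qed.

Theorem mainTheorem18 (p q e : nat) (v : nat * nat) (n : nat) :
  0 < p -> 0 < q -> 2 <= e -> in_Z2e e v -> cycle_length e p q v n ->
  n = 1 \/ exists k, k < e /\ n = 2 ^ k * T1 p q.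
Proof.
move=> _ _ He Hv [Hn0 [Hnv Hmin]].
have iterM : forall k, iter (k * n) (cat_map e p q) v = v.
  by elim=> [|k IH] //; rewrite mulSn iterD IH Hnv.
have dvd_of : forall N, iter N (cat_map e p q) v = v -> n %| N.
  move=> N HN.
  have E : iter N (cat_map e p q) v = iter (N %% n) (cat_map e p q) v.
    by rewrite {1}(divn_eq N n) addnC iterD iterM.
  case H0: (N %% n) E => [|r] E; first by rewrite /dvdn H0.
  exfalso; apply: (Hmin r.+1) => //; first by rewrite -H0 ltn_pmod.
  by rewrite -E.
have Hd : n %| T1 p q * 2 ^ (e - 1).
  apply: dvd_of; rewrite iter_mpow //; apply: congI_app => //.
  have := pow_cong p q (e - 1); by rewrite subn1 prednK // ltnW.
have [->|n1] : n = 1 \/ 1 < n by lia.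
  by left.
right.
have pow2 : forall m k, m %| 2 ^ k -> exists2 i, i <= k & m = 2 ^ i.
  by move=> m k /(dvdn_pfactor _ _ (isT : prime 2)) [i Hi ->]; exists i.
move: Hd; rewrite /T1; case Hp: (odd p); case Hq: (odd q) => /= Hd.
- case H3: (3 %| n).
    move: H3 => /dvdnP [m Hm]; move: Hd; rewrite Hm [3 * _]mulnC dvdn_pmul2r // => Hd.
    have [i Hi ->] := pow2 _ _ Hd; exists i; split => //; lia.
  have Hc : coprime 3 n by rewrite prime_coprime // H3.
  have Hd2 : n %| 2 ^ (e - 1) by rewrite -(@Gauss_dvdr n 3) // coprime_sym.
  exfalso.
  have Hv0 : v = (0, 0).
    apply: (@zero_fix e p q n v Hp Hq Hv); first by move: H3; rewrite /dvdn => ->.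
    by rewrite -iter_mpow.
  apply: (Hmin 1) => //; rewrite Hv0 /= /cat_map /=.
  by rewrite !muln0 !addn0 mod0n.
- have [i Hi Hn] := pow2 n (e - 1).+1 ltac:(by rewrite expnS).
  case: i Hi Hn => [|i] Hi Hn; first by move: n1; rewrite Hn.
  by exists i; split; [lia | rewrite Hn expnSr].
- have [i Hi Hn] := pow2 n (e - 1).+1 ltac:(by rewrite expnS).
  case: i Hi Hn => [|i] Hi Hn; first by move: n1; rewrite Hn.
  by exists i; split; [lia | rewrite Hn expnSr].
- have [i Hi Hn] := pow2 n (e - 1) ltac:(by rewrite -(mul1n (2 ^ _))).
  by exists i; split; [lia | rewrite Hn muln1].
Qed.
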